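(* Let $(V_{cl}, V_{op}, m_{cl-op})$ be an open-closed field algebra and let $\mathbb{Y}_{cl-op}(u; z, \bar{z})v := m_{cl-op}^{(1;1)}(u;v;z,\bar{z};0)$ for $u\in V_{cl}$, $v\in V_{op}$, $z\in \mathbb{H}$. Then for $u\in V_{cl}$, \begin{eqnarray*} [\mathbf{d}_{op}, \mathbb{Y}_{cl-op}(u; z, \bar{z})] &=& \mathbb{Y}_{cl-op}((\mathbf{d}_{cl}^L + \mathbf{d}_{cl}^R)u; z, \bar{z}) + \left( z\frac{\partial}{\partial z} + \bar{z} \frac{\partial}{\partial \bar{z}} \right) \mathbb{Y}_{cl-op}(u; z, \bar{z}). \end{eqnarray*}
   Context: An open-closed field algebra consists of an $\mathbb{R}\times\mathbb{R}$-graded full field algebra $(V_{cl}, m_{cl}, \mathbf{d}_{cl}^L, \mathbf{d}_{cl}^R, D_{cl}^L, D_{cl}^R)$ (with left/right grading operators $\mathbf{d}_{cl}^L,\mathbf{d}_{cl}^R$), an $\mathbb{R}$-graded vector space $V_{op}$ with grading operator $\mathbf{d}_{op}$ and an operator $D_{op}$, and maps $m_{cl-op}^{(l;n)}: V_{cl}^{\otimes l}\otimes V_{op}^{\otimes n}\times M_{\mathbb{H}}^l\times\Lambda^n\to\overline{V}_{op}$ (with $M_{\mathbb{H}}^l$ the configuration space of $l$ distinct points in the upper half plane $\mathbb{H}$ and $\Lambda^n=\{r_1>\dots>r_n\geq 0\}$), linear in the vector arguments and smooth in the positions, satisfying identity, convergence, permutation, $D_{op}$ and the following grading property: for $a\in\mathbb{R}$,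 $e^{a\mathbf{d}_{op}} m_{cl-op}^{(l;n)}(u_1,\dots,u_l;v_1,\dots,v_n;z_1,\bar z_1,\dots,z_l,\bar z_l;r_1,\dots,r_n) = m_{cl-op}^{(l;n)}(e^{a(\mathbf{d}_{cl}^L+\mathbf{d}_{cl}^R)}u_1,\dots,e^{a(\mathbf{d}_{cl}^L+\mathbf{d}_{cl}^R)}u_l; e^{a\mathbf{d}_{op}}v_1,\dots,e^{a\mathbf{d}_{op}}v_n; e^az_1,e^a\bar z_1,\dots,e^az_l,e^a\bar z_l; e^ar_1,\dots,e^ar_n)$. *)

(* Defs.v *)
From HB Require Import structures.
From mathcomp Require Import all_boot all_order all_algebra.
From mathcomp Require Import all_classical all_reals topology normedtype derive sequences.
From mathcomp.analysis Require Import exp.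
From mathcomp Require Import complex.
Set Implicit Arguments. Unset Strict Implicit. Unset Printing Implicit Defensive.
Import Order.TTheory GRing.Theory Num.Theory numFieldNormedType.Exports.
Local Open Scope ring_scope.
Local Open Scope complex_scope.

Section Defs.
Variable R : realType.
Local Notation C := (R[i]).

Definition pdx (f : R -> R -> R) : R -> R -> R :=
  fun x y => derive1 (fun t => f t y) x.
Definition pdy (f : R -> R -> R) : R -> R -> R :=
  fun x y => derive1 (fun t => f x t) y.

Fixpoint Ck_on (D : R -> R -> Prop) (k : nat) (f : R -> R -> R) : Prop :=
  match k with
  | 0 => forall x y, D x y -> {for (x, y), continuous (fun p : R * R => f p.1 p.2)}
  | k'.+1 =>
      (forall x y, D x y -> {for (x, y), continuous (fun p : R * R => f p.1 p.2)}) /\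
      (forall x y, D x y ->
         derivable (fun t => f t y) x 1 /\ derivable (fun t => f x t) y 1) /\
      Ck_on D k' (pdx f) /\ Ck_on D k' (pdy f)
  end.

Definition smooth_on (D : R -> R -> Prop) (f : R -> R -> C) : Prop :=
  forall k, Ck_on D k (fun x y => complex.Re (f x y)) /\ Ck_on D k (fun x y => complex.Im (f x y)).

Definition pdxC (f : R -> R -> C) : R -> R -> C :=
  fun x y => (pdx (fun a b => complex.Re (f a b)) x y) +i* (pdx (fun a b => complex.Im (f a b)) x y).
Definition pdyC (f : R -> R -> C) : R -> R -> C :=
  fun x y => (pdy (fun a b => complex.Re (f a b)) x y) +i* (pdy (fun a b => complex.Im (f a b)) x y).

Definition dz (f : R -> R -> C) : R -> R -> C :=
  fun x y => (pdxC f x y - 'i * pdyC f x y) / 2%:R.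
Definition dzbar (f : R -> R -> C) : R -> R -> C :=
  fun x y => (pdxC f x y + 'i * pdyC f x y) / 2%:R.

Definition upper_half (x y : R) : Prop := 0 < y.

(* ---------- the data of an open-closed field algebra ----------
   V_cl is R x R-graded: V_cl = (+)_{(r,s)} V_cl(r,s) (projections Pcl r s);
   V_op is R-graded:     V_op = (+)_{n} V_op(n) (projections Pop n).
   An element of the completion \overline{V}_op = prod_n V_op(n) is modelled
   as a family f : R -> V_op with Pop n (f n) = f n.
   Only the component m^{(1;1)}_{cl-op}(u; v; z, zbar; 0) (i.e. r_1 = 0) of
   m_cl-op is recorded, written mY u v x y n = n-th homogeneous component of
   m^{(1;1)}_{cl-op}(u; v; x + i y, x - i y; 0). *)
Record OCFA := {
  Vcl : lmodType C;
  Vop : lmodType C;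
  Pcl : R -> R -> {linear Vcl -> Vcl};
  Pcl_proj : forall r s r' s' u,
      Pcl r s (Pcl r' s' u) = if (r == r') && (s == s') then Pcl r s u else 0;
  Pcl_fin : forall u, exists S : seq (R * R),
      uniq S /\ u = \sum_(p <- S) Pcl p.1 p.2 u /\
      (forall r s, (r, s) \notin S -> Pcl r s u = 0);
  dL : {linear Vcl -> Vcl};
  dR : {linear Vcl -> Vcl};
  dL_spec : forall r s u, Pcl r s (dL u) = r%:C *: Pcl r s u;
  dR_spec : forall r s u, Pcl r s (dR u) = s%:C *: Pcl r s u;
  ecl : R -> {linear Vcl -> Vcl};
  ecl_spec : forall a r s u, Pcl r s (ecl a u) = (expR (a * (r + s)))%:C *: Pcl r s u;
  Pop : R -> {linear Vop -> Vop};
  Pop_proj : forall n n' v, Pop n (Pop n' v) = if n == n' then Pop n v else 0;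
  Pop_fin : forall v, exists S : seq R,
      uniq S /\ v = \sum_(n <- S) Pop n v /\ (forall n, n \notin S -> Pop n v = 0);
  dop : {linear Vop -> Vop};
  dop_spec : forall n v, Pop n (dop v) = n%:C *: Pop n v;
  eop : R -> {linear Vop -> Vop};
  eop_spec : forall a n v, Pop n (eop a v) = (expR (a * n))%:C *: Pop n v;
  mY : Vcl -> Vop -> R -> R -> R -> Vop;
  mY_hom : forall u v x y n, Pop n (mY u v x y n) = mY u v x y n;
  mY_linl : forall v x y n, linear (fun u => mY u v x y n);
  mY_linr : forall u x y n, linear (fun v => mY u v x y n);
  mY_smooth : forall u v n (phi : {scalar Vop}),
      smooth_on upper_half (fun x y => phi (mY u v x y n));
  mY_grading : forall a u v x y n, 0 < y ->
      (expR (a * n))%:C *: mY u v x y n =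
      mY (ecl a u) (eop a v) (expR a * x) (expR a * y) n
}.

Definition Ycl_op (A : OCFA) (u : Vcl A) (x y : R) (v : Vop A) : R -> Vop A :=
  @mY A u v x y.

Definition dop_bar (A : OCFA) (f : R -> Vop A) : R -> Vop A :=
  fun n => n%:C *: f n.

Definition comm_dop_Y (A : OCFA) (u : Vcl A) (x y : R) (v : Vop A) : R -> Vop A :=
  fun n => dop_bar (Ycl_op u x y v) n - Ycl_op u x y (@dop A v) n.

End Defs.

(* Main.v *)
Require Import Defs.
From HB Require Import structures.
From mathcomp Require Import all_boot all_order all_algebra.
From mathcomp Require Import all_classical all_reals topology normedtype derive sequences.
From mathcomp.analysis Require Import exp.
From mathcomp Require Import complex.
From mathcomp.analysis Require Import realfun.
From mathcomp Require Import ring lra.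
Import Order.TTheory GRing.Theory Num.Theory numFieldNormedType.Exports.
Local Open Scope ring_scope.
Local Open Scope complex_scope.
Local Open Scope classical_set_scope.

Lemma derivable_cont (R : realType) (p : R -> R) (a : R) :
  derivable p a 1 -> {for a, continuous p}.
Proof. by move=> /derivable1_diffP /differentiable_continuous. Qed.

Lemma derive_quot (R : realType) (p : R -> R) (dp : R) :
  is_derive (0:R) 1 p dp -> (fun h => h^-1 * (p h - p 0)) @ 0^' --> dp.
Proof.
move=> Hp.
have := @ex_derive _ _ _ _ _ _ _ Hp; rewrite /derivable.
rewrite -[lim _]/(derive p 0 1) (@derive_val _ _ _ _ _ _ _ Hp).
have -> : (fun h : R => h^-1 *: ((p \o shift 0) (h *: 1) - p 0)) =
          (fun h => h^-1 * (p h - p 0)).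
  by apply/funext => h /=; rewrite addr0 [h *: 1]mulr1.
by [].
Qed.

Lemma core (R : realType) (g : R -> R -> R) (p q : R -> R) (dp dq : R) :
  Ck_on (@upper_half R) 1 g -> is_derive (0:R) 1 p dp -> is_derive (0:R) 1 q dq ->
  0 < q 0 ->
  is_derive (0:R) 1 (fun a => g (p a) (q a))
    (dp * pdx g (p 0) (q 0) + dq * pdy g (p 0) (q 0)).
Proof.
move=> [gc [gd [gxC gyC]]] Hp Hq q0pos.
set p0 := p 0; set q0 := q 0.
have pc : {for 0, continuous p} by apply: derivable_cont; exact: ex_derive.
have qc : {for 0, continuous q} by apply: derivable_cont; exact: ex_derive.
have qpos : \forall h \near 0, 0 < q h.
  move/cvgrPdist_lt: qc => /(_ _ q0pos); apply: filterS => h.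
  rewrite -/q0 => H.
  by have := ler_norm (q0 - q h); lra.
have qpos' : \forall h \near 0^', 0 < q h.
  by apply: cvg_within; exact: qpos.
have gyd : derivable (fun t => g p0 t) q0 1 by exact: (gd _ _ q0pos).2.
have HB : is_derive (0:R) 1 (fun a => g p0 (q a)) (dq * pdy g p0 q0).
  have dB : derivable (fun a => g p0 (q a)) 0 1.
    apply/derivable1_diffP; apply: (@differentiable_comp _ _ _ _ q (fun t => g p0 t)).
      by apply/derivable1_diffP; exact: (@ex_derive _ _ _ _ _ _ _ Hq).
    by apply/derivable1_diffP.
  apply: DeriveDef => //.
  have dq1 := @ex_derive _ _ _ _ _ _ _ Hq.
  rewrite -derive1E (@derive1_comp _ q (fun t => g p0 t) 0 dq1 gyd).
  rewrite /pdy !derive1E (@derive_val _ _ _ _ _ _ _ Hq) mulrC.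
  by [].
set A := fun a => g (p a) (q a) - g p0 (q a).
pose P h c := `|c - p0| <= `|p h - p0| /\ A h = pdx g c (q h) * (p h - p0).
have exP : forall h, 0 < q h -> exists c, P h c.
  move=> h qh.
  pose f := fun t => g t (q h).
  have fd : forall t : R, is_derive t (1:R) f (pdx g t (q h)).
    move=> t; rewrite /pdx derive1E; apply: derivableP; exact: (gd _ _ qh).1.
  have fc : forall a b : R, {within `[a, b], continuous f}.
    move=> a b; apply: derivable_within_continuous => t _.
    exact: (gd _ _ qh).1.
  have [le|lt] := leP p0 (p h).
    have [c cin E] := MVT_segment le (fun t _ => fd t) (fc _ _).
    move: cin; rewrite in_itv /= => /andP[c1 c2].
    exists c; split; last by rewrite /A -/(f _) -/(f _) E.
    rewrite !ger0_norm ?subr_ge0 //; lra.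
  have [c cin E] := MVT_segment (ltW lt) (fun t _ => fd t) (fc _ _).
  move: cin; rewrite in_itv /= => /andP[c1 c2].
  exists c; split.
    rewrite !ler0_norm ?subr_le0 //; [lra|exact: ltW].
  have -> : A h = - (f p0 - f (p h)) by rewrite /A /f opprB.
  by rewrite E -mulrN opprB.
pose xi h := xget p0 (P h).
have Pxi : forall h, 0 < q h -> P h (xi h).
  move=> h /exP [c Pc]; rewrite /xi; case: xgetP => // Hn.
  by exfalso; apply: (Hn c).
have A0 : A 0 = 0 by rewrite /A subrr.
have L : (fun h => h^-1 * A h) @ 0^' --> dp * pdx g p0 q0.
  have e1 : {near 0^', (fun h => pdx g (xi h) (q h) * (h^-1 * (p h - p0))) =1
                       (fun h => h^-1 * A h)}.
    near=> h.
    have qh : 0 < q h by near: h.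
    by rewrite /= (Pxi h qh).2 mulrCA.
  apply: cvg_trans (near_eq_cvg e1) _.
  rewrite [dp * _]mulrC.
  apply: (@cvgM _ _ _ _ (fun h => pdx g (xi h) (q h)) (fun h => h^-1 * (p h - p0))); last first.
    exact: derive_quot.
  have Hg := gxC p0 q0 q0pos.
  have Hxi : xi @ 0^' --> p0.
    apply/cvgrPdist_le => e e0.
    move/cvgrPdist_le: pc => /(_ e e0) pe.
    near=> h.
    have qh : 0 < q h by near: h.
    have h1 := (Pxi h qh).1.
    have h2 : `|p0 - p h| <= e by near: h; apply: cvg_within.
    by rewrite distrC; rewrite distrC in h2; apply: le_trans h1 h2.
  have Hqq : q @ 0^' --> q0 by apply: cvg_within_filter; exact: qc.
  exact: (@continuous2_cvg _ _ _ _ _ _ xi q (fun a b => pdx g a b) p0 q0 Hg Hxi Hqq).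
have Heq : (fun h : R => h^-1 *: ((A \o shift 0) (h *: 1) - A 0)) = (fun h => h^-1 * A h).
  by apply/funext => h /=; rewrite addr0 [h *: 1]mulr1 A0 subr0.
have HA : is_derive (0:R) 1 A (dp * pdx g p0 q0).
  apply: DeriveDef.
    by rewrite /derivable Heq; apply/cvg_ex; exists (dp * pdx g p0 q0).
  by rewrite /derive Heq; exact: cvg_lim L.
have -> : (fun a => g (p a) (q a)) = A + (fun a => g p0 (q a)).
  by apply/funext => a; rewrite /A /= subrK.
exact: is_deriveD.
Unshelve. all: by end_near.
Qed.

Lemma lin_scale (K : pzRingType) (U V : lmodType K) (f : U -> V) :
  linear f -> forall a u, f (a *: u) = a *: f u.
Proof. by move=> Lf a u; exact: (@scalable_linear _ _ _ *:%R f Lf a u). Qed.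

Lemma lin_sum (K : pzRingType) (U V : lmodType K) (f : U -> V) (I : Type)
  (s : seq I) (F : I -> U) :
  linear f -> f (\sum_(i <- s) F i) = \sum_(i <- s) f (F i).
Proof.
move=> Lf; have Hz := zmod_morphism_linear Lf.
have f0 : f 0 = 0 by rewrite -(subrr 0) Hz subrr.
have fN z : f (- z) = - f z by rewrite -sub0r Hz f0 sub0r.
have fD z w : f (z + w) = f z + f w by have := Hz z (- w); rewrite opprK fN opprK.
elim: s => [|i s IH]; first by rewrite !big_nil f0.
by rewrite !big_cons fD IH.
Qed.

Lemma hom_cl (R : realType) (A : OCFA R) (L : {linear Vcl A -> Vcl A})
  (c : R -> R -> R[i]) (w : Vcl A) r s :
  (forall r' s' w', Pcl A r' s' (L w') = c r' s' *: Pcl A r' s' w') ->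
  Pcl A r s w = w -> L w = c r s *: w.
Proof.
move=> HL Hw.
have [S [_ [HS _]]] := Pcl_fin (L w).
have Hfix : Pcl A r s (L w) = L w.
  transitivity (\sum_(p <- S) Pcl A p.1 p.2 (L w)); last by rewrite -HS.
  rewrite {1}HS linear_sum; apply: eq_bigr => p _.
  rewrite Pcl_proj; case: ifP => [/andP[/eqP e1 /eqP e2]|ne]; first by rewrite e1 e2.
  by rewrite HL -Hw Pcl_proj (eq_sym p.1) (eq_sym p.2) ne scaler0.
by rewrite -Hfix HL Hw.
Qed.

Lemma hom_op (R : realType) (A : OCFA R) (L : {linear Vop A -> Vop A})
  (c : R -> R[i]) (w : Vop A) m :
  (forall m' w', Pop A m' (L w') = c m' *: Pop A m' w') ->
  Pop A m w = w -> L w = c m *: w.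
Proof.
move=> HL Hw.
have [S [_ [HS _]]] := Pop_fin (L w).
have Hfix : Pop A m (L w) = L w.
  transitivity (\sum_(p <- S) Pop A p (L w)); last by rewrite -HS.
  rewrite {1}HS linear_sum; apply: eq_bigr => p _.
  rewrite Pop_proj; case: ifP => [/eqP e1|ne]; first by rewrite e1.
  by rewrite HL -Hw Pop_proj (eq_sym p) ne scaler0.
by rewrite -Hfix HL Hw.
Qed.

Lemma is_derive_bigsum (R : realType) (I : Type) (s : seq I) (F : I -> R -> R)
  (dF : I -> R) (x : R) :
  (forall i, is_derive x 1 (F i) (dF i)) ->
  is_derive x 1 (fun a => \sum_(i <- s) F i a) (\sum_(i <- s) dF i).
Proof.
move=> HF; elim: s => [|i s IH].
  have -> : (fun a => \sum_(i <- [::]) F i a) = cst 0.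
    by apply/funext => a; rewrite big_nil.
  rewrite big_nil; exact: is_derive_cst.
have -> : (fun a => \sum_(j <- i :: s) F j a) =
          F i + (fun a => \sum_(j <- s) F j a).
  by apply/funext => a; rewrite big_cons.
rewrite big_cons; exact: is_deriveD.
Qed.

Lemma is_derive_expc (R : realType) (c K : R) :
  is_derive (0:R) 1 (fun a => expR (a * c) * K) (c * K).
Proof.
have H1 : is_derive (0:R) 1 (fun a : R => a * c) c.
  have -> : (fun a : R => a * c) = c \*: (id : R -> R).
    by apply/funext => a /=; rewrite mulrC.
  by apply: is_derive_eq; rewrite [_%:A]mulr1.
have H2 : is_derive (0:R) 1 (expR \o (fun a : R => a * c)) (expR (0 * c) * c).
  by apply: is_derive1_comp.
have -> : (fun a => expR (a * c) * K) = K \*: (expR \o (fun a : R => a * c)).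
  by apply/funext => a /=; rewrite mulrC.
apply: is_derive_eq.
by rewrite [_ *: _]mulrC mul0r expR0 mul1r.
Qed.
Local Open Scope complex_scope.

Lemma Cext (R : realType) (z w : R[i]) :
  complex.Re z = complex.Re w -> complex.Im z = complex.Im w -> z = w.
Proof. by case: z => a b; case: w => c d /= -> ->. Qed.

Lemma ReM (R : realType) (k : R) (z : R[i]) : complex.Re (k%:C * z) = k * complex.Re z.
Proof. by case: z => a b /=; rewrite mul0r subr0. Qed.

Lemma ImM (R : realType) (k : R) (z : R[i]) : complex.Im (k%:C * z) = k * complex.Im z.
Proof. by case: z => a b /=; rewrite mul0r addr0. Qed.

Lemma ReD (R : realType) (z w : R[i]) : complex.Re (z + w) = complex.Re z + complex.Re w.
Proof. by case: z => a b; case: w. Qed.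

Lemma ImD (R : realType) (z w : R[i]) : complex.Im (z + w) = complex.Im z + complex.Im w.
Proof. by case: z => a b; case: w. Qed.

Lemma keyC (R : realType) (x y : R) (a b : R[i]) :
  (x +i* y) * ((a - 'i * b) / 2%:R) + (x -i* y) * ((a + 'i * b) / 2%:R) =
  x%:C * a + y%:C * b.
Proof.
have E1 : x +i* y = x%:C + 'i * y%:C by apply: Cext; simpc.
have E2 : x -i* y = x%:C - 'i * y%:C by apply: Cext; simpc.
have hI : 'i * 'i = -1 :> R[i] by rewrite -expr2 sqr_i.
rewrite E1 E2.
transitivity (x%:C * a - 'i * 'i * (y%:C * b)).
  by field.
by rewrite hI mulN1r opprK.
Qed.

Local Open Scope ring_scope.
Local Open Scope complex_scope.

Theorem proposition1p11 (R : realType) (A : OCFA R) (u : Vcl A) (v : Vop A)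
    (x y : R) (hy : 0 < y) (n : R) (phi : {scalar Vop A}) :
  phi (comm_dop_Y u x y v n) =
  phi (Ycl_op (@dL R A u + @dR R A u) x y v n)
  + ((x +i* y) * dz (fun a b => phi (Ycl_op u a b v n)) x y
     + (x -i* y) * dzbar (fun a b => phi (Ycl_op u a b v n)) x y).
Proof.
set f := fun a b => phi (Ycl_op u a b v n).
have [S [_ [HS _]]] := Pcl_fin u.
have [T [_ [HT _]]] := Pop_fin v.
pose w (pr : R * R) := Pcl A pr.1 pr.2 u.
pose vm (m : R) := Pop A m v.
have Hw pr : Pcl A pr.1 pr.2 (w pr) = w pr by rewrite /w Pcl_proj !eqxx.
have Hvm m : Pop A m (vm m) = vm m by rewrite /vm Pop_proj eqxx.
pose G pr m X Y := phi (mY (w pr) (vm m) X Y n).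
pose c (pr : R * R) m := n - (pr.1 + pr.2) - m.
have Dec : forall (F : R * R -> Vcl A) (H : R -> Vop A) X Y,
    phi (mY (\sum_(pr <- S) F pr) (\sum_(m <- T) H m) X Y n) =
    \sum_(pr <- S) \sum_(m <- T) phi (mY (F pr) (H m) X Y n).
  move=> F H X Y.
  have E := @lin_sum _ _ _ (fun u' => mY u' (\sum_(m <- T) H m) X Y n) _ S F
    (mY_linl _ _ _ _).
  rewrite /= in E; rewrite E linear_sum; apply: eq_bigr => pr _.
  have E' := @lin_sum _ _ _ (fun v' => mY (F pr) v' X Y n) _ T H (mY_linr _ _ _ _).
  by rewrite /= in E'; rewrite E' linear_sum.
have Gsum : forall X Y, f X Y = \sum_(pr <- S) \sum_(m <- T) G pr m X Y.
  move=> X Y; rewrite /f /Ycl_op {1}HS {1}HT; exact: Dec.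
have K1 : forall pr m a, G pr m (expR a * x) (expR a * y) =
    (expR (a * c pr m))%:C * G pr m x y.
  move=> pr m a.
  have Eg := mY_grading a (w pr) (vm m) x n hy.
  have E1 : ecl A a (w pr) = (expR (a * (pr.1 + pr.2)))%:C *: w pr.
    apply: (@hom_cl _ _ (ecl A a) (fun r s => (expR (a * (r + s)))%:C)) => //.
    by move=> r' s' w'; exact: ecl_spec.
  have E2 : eop A a (vm m) = (expR (a * m))%:C *: vm m.
    apply: (@hom_op _ _ (eop A a) (fun m' => (expR (a * m'))%:C)) => //.
    by move=> m' w'; exact: eop_spec.
  rewrite E1 E2 in Eg.
  rewrite (lin_scale _ _ _ _ (mY_linl _ _ _ _)) in Eg.
  rewrite (lin_scale _ _ _ _ (mY_linr _ _ _ _)) in Eg.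
  have Eq := congr1 phi Eg; rewrite !linearZ /= in Eq.
  rewrite /G.
  set P0 := phi (mY _ _ x y n) in Eq *.
  set P1 := phi (mY _ _ (expR a * x) (expR a * y) n) in Eq *.
  have nz : (expR (a * (pr.1 + pr.2)))%:C * (expR (a * m))%:C != 0 :> R[i].
    by rewrite -rmorphM fmorph_eq0 -expRD gt_eqF // expR_gt0.
  apply: (mulfI nz).
  rewrite -[LHS]mulrA -Eq [RHS]mulrA -!rmorphM -!expRD.
  congr ((expR _)%:C * _); rewrite /c; ring.
pose Sv := \sum_(pr <- S) \sum_(m <- T) (c pr m)%:C * G pr m x y.
have E2 : forall pj : R[i] -> R,
    (forall k z, pj (k%:C * z) = k * pj z) ->
    (forall z1 z2, pj (z1 + z2) = pj z1 + pj z2) -> pj 0 = 0 ->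
    Ck_on (@upper_half R) 1 (fun a b => pj (f a b)) ->
    x * pdx (fun a b => pj (f a b)) x y + y * pdy (fun a b => pj (f a b)) x y
    = pj Sv.
  move=> pj pjM pjD pj0 Ck.
  have pjS : forall (I : Type) (s : seq I) F,
      pj (\sum_(i <- s) F i) = \sum_(i <- s) pj (F i).
    by move=> I s F; elim: s => [|i s IH]; rewrite ?big_nil ?big_cons ?pj0 // pjD IH.
  have Hlin : forall t : R, is_derive (0:R) 1 (fun a : R => expR a * t) t.
    move=> t.
    have -> : (fun a : R => expR a * t) = t \*: (expR : R -> R).
      by apply/funext => a /=; rewrite mulrC.
    by apply: is_derive_eq; rewrite [_ *: _]mulrC expR0 mul1r.
  have q0 : 0 < expR 0 * y by rewrite expR0 mul1r.
  have Hc := core _ _ _ _ _ _ Ck (Hlin x) (Hlin y) q0.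
  rewrite /= expR0 !mul1r in Hc.
  have Hc' : is_derive (0:R) 1
      (fun a => \sum_(pr <- S) \sum_(m <- T) expR (a * c pr m) * pj (G pr m x y))
      (x * pdx (fun a b => pj (f a b)) x y + y * pdy (fun a b => pj (f a b)) x y).
    have <- : (fun a => pj (f (expR a * x) (expR a * y))) =
      (fun a => \sum_(pr <- S) \sum_(m <- T) expR (a * c pr m) * pj (G pr m x y)).
      apply/funext => a; rewrite Gsum pjS; apply: eq_bigr => pr _.
      by rewrite pjS; apply: eq_bigr => m _; rewrite K1 pjM.
    exact: Hc.
  have Hd : is_derive (0:R) 1
      (fun a => \sum_(pr <- S) \sum_(m <- T) expR (a * c pr m) * pj (G pr m x y))
      (\sum_(pr <- S) \sum_(m <- T) c pr m * pj (G pr m x y)).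
    apply: is_derive_bigsum => pr.
    apply: (@is_derive_bigsum _ _ T (fun m a => expR (a * c pr m) * pj (G pr m x y))).
    move=> m; exact: is_derive_expc.
  have := @derive_val _ _ _ _ _ _ _ Hc'.
  rewrite (@derive_val _ _ _ _ _ _ _ Hd) => <-.
  rewrite /Sv pjS; apply: eq_bigr => pr _.
  by rewrite pjS; apply: eq_bigr => m _; rewrite pjM.
have M1 : phi (mY u (dop A v) x y n) =
    \sum_(pr <- S) \sum_(m <- T) m%:C * G pr m x y.
  have -> : mY u (dop A v) x y n =
      mY (\sum_(pr <- S) w pr) (\sum_(m <- T) dop A (vm m)) x y n.
    by rewrite -linear_sum -HS -HT.
  rewrite Dec; apply: eq_bigr => pr _; apply: eq_bigr => m _.
  rewrite (@hom_op _ _ (dop A) (fun m' => m'%:C) (vm m) m) //; last first.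
    by move=> m' w'; exact: dop_spec.
  by rewrite (lin_scale _ _ _ _ (mY_linr _ _ _ _)) linearZ.
have linD : forall (V W : lmodType R[i]) (g : V -> W), linear g ->
    forall a b, g (a + b) = g a + g b.
  move=> V W g Lg a b.
  have := @lin_sum _ _ _ g _ [:: a; b] id Lg.
  by rewrite !big_cons !big_nil !addr0.
have M2 : phi (mY (dL A u + dR A u) v x y n) =
    \sum_(pr <- S) \sum_(m <- T) (pr.1 + pr.2)%:C * G pr m x y.
  have -> : mY (dL A u + dR A u) v x y n =
      mY (\sum_(pr <- S) (dL A (w pr) + dR A (w pr))) (\sum_(m <- T) vm m) x y n.
    by rewrite big_split -!linear_sum -HS -HT.
  rewrite Dec; apply: eq_bigr => pr _; apply: eq_bigr => m _.
  rewrite (@hom_cl _ _ (dL A) (fun r s => r%:C) (w pr) pr.1 pr.2) //; last first.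
    by move=> r' s' w'; exact: dL_spec.
  rewrite (@hom_cl _ _ (dR A) (fun r s => s%:C) (w pr) pr.1 pr.2) //; last first.
    by move=> r' s' w'; exact: dR_spec.
  rewrite (linD _ _ _ (mY_linl _ _ _ _)).
  rewrite !(lin_scale _ _ _ _ (mY_linl _ _ _ _)) linearD !linearZ /=.
  by rewrite rmorphD mulrDl.
have Eq1 : phi (comm_dop_Y u x y v n) =
    phi (Ycl_op (dL A u + dR A u) x y v n) + Sv.
  rewrite /comm_dop_Y /dop_bar /Ycl_op linearB linearZ /= M1 M2.
  have := Gsum x y; rewrite /f /Ycl_op => ->.
  rewrite /Sv mulr_sumr -sumrB -big_split /=; apply: eq_bigr => pr _.
  rewrite mulr_sumr -sumrB -big_split /=; apply: eq_bigr => m _.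
  rewrite /c !rmorphB rmorphD /=; ring.
rewrite Eq1; congr (_ + _).
rewrite /dz /dzbar keyC.
have [CRe CIm] := mY_smooth u v n phi 1.
apply: Cext.
  rewrite ReD !ReM /pdxC /pdyC /=.
  symmetry; apply: E2 => //.
  - exact: ReM.
  - exact: ReD.
rewrite ImD !ImM /pdxC /pdyC /=.
symmetry; apply: E2 => //.
- exact: ImM.
- exact: ImD.
Qed.
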